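(* Let $G$ be a word-hyperbolic group with marked finite generating set $A$, let $X=\Gamma(G,A)$ with word metric $d_X$ and $|g|_X=d_X(1,g)$, let $H\le G$ be quasiconvex, and let $Y=\Gamma(G/H,A)$ with simplicial metric $d_Y$. Then there is an integer constant $K_1>0$ (depending only on $G,A,H$) with the following property. Let $g,f\in G$ be elements of minimal $|\cdot|_X$-length in the cosets $Hg$ and $Hf$ respectively. Let $w$ be the label (a word over $A^{\pm1}$) of a near geodesic path in $Y$ from $Hg$ to $Hf$, and let $h\in H$ be such that $hf=g\bar w$, where $\bar w\in G$ is the element represented by $w$. Then $|h|_X\le K_1$.
   Context: A marked finite generating set of $G$ is a map $\pi:A\to G$ from a finite alphabet such that $\pi(A)$ generates $G$. $\Gamma(G/H,A)$ is the graph with vertices the right cosets $Hg$ and, for each $(Hg,a)\in G/H\times A$, an edge from $Hg$ to $Hg\pi(a)$ labeled $a$; $\Gamma(G,A)$ is the case $H=1$. All edges have length one. A path $p$ in a geodesic metric space is near geodesic if $p=p_1p'p_2$ where $p_1,p',p_2$ are geodesic segments and $0\le l(p_i)\le 1$ for $i=1,2$. $H$ quasiconvex means there is $E>0$ such that every geodesic in $X$ with endpoints in $H$ lies in the $E$-neighborhood of $H$. *)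

(* Defs.v *)
From mathcomp Require Import all_boot.
Set Implicit Arguments. Unset Strict Implicit. Unset Printing Implicit Defensive.

Record group := Group {
  carrier :> Type;
  gmul : carrier -> carrier -> carrier;
  ginv : carrier -> carrier;
  gone : carrier;
  gmulA : forall x y z, gmul x (gmul y z) = gmul (gmul x y) z;
  gmul1 : forall x, gmul gone x = x;
  gmulV : forall x, gmul (ginv x) x = gone
}.

Section Words.
Variables (G : group) (A : finType) (pi : A -> G).

(* Letters of A^{+-1}: (a, false) stands for a, (a, true) for a^{-1}. *)
Definition letter := (A * bool)%type.

Definition eval_letter (l : letter) : G :=
  if l.2 then ginv (pi l.1) else pi l.1.

Definition eval (w : seq letter) : G :=
  foldr (fun l acc => gmul (eval_letter l) acc) (gone G) w.

Definition generates : Prop := forall g : G, exists w, eval w = g.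

Definition dX_le (x y : G) (n : nat) : Prop :=
  exists w, size w <= n /\ gmul x (eval w) = y.

Definition len_le (x y : G) : Prop :=
  forall n, dX_le (gone G) y n -> dX_le (gone G) x n.

Definition geodesicX (w : seq letter) : Prop :=
  forall w', eval w' = eval w -> size w <= size w'.

Definition vertX (x : G) (w : seq letter) (i : nat) : G :=
  gmul x (eval (take i w)).

(* delta-slim geodesic triangles in X (Rips condition): for a geodesic
   triangle with sides labeled u, v, w (starting at 1), every vertex on
   side u lies within delta of a vertex on side v or side w. *)
Definition hyperbolic : Prop :=
  exists delta : nat, forall u v w,
    geodesicX u -> geodesicX v -> geodesicX w ->
    eval (u ++ v ++ w) = gone G ->
    forall i, i <= size u ->
      (exists j, j <= size v /\
         dX_le (vertX (gone G) u i) (vertX (eval u) v j) delta) \/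
      (exists k, k <= size w /\
         dX_le (vertX (gone G) u i) (vertX (eval (u ++ v)) w k) delta).

Definition subgroup (H : G -> Prop) : Prop :=
  H (gone G) /\ (forall x y, H x -> H y -> H (gmul x y)) /\
  (forall x, H x -> H (ginv x)).

Definition quasiconvex (H : G -> Prop) : Prop :=
  exists E : nat, 0 < E /\ forall h w, H h -> geodesicX w -> H (gmul h (eval w)) ->
    forall i, i <= size w -> exists h', H h' /\ dX_le (vertX h w i) h' E.

(* right cosets: Hx = Hy *)
Definition coset_eq (H : G -> Prop) (x y : G) : Prop := H (gmul x (ginv y)).

(* In Y = Gamma(G/H,A): the path starting at Hx labeled w ends at Hy *)
Definition pathY (H : G -> Prop) (x : G) (w : seq letter) (y : G) : Prop :=
  coset_eq H (gmul x (eval w)) y.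

Definition geodesicY (H : G -> Prop) (x : G) (w : seq letter) : Prop :=
  forall w', pathY H x w' (gmul x (eval w)) -> size w <= size w'.

Definition near_geodesicY (H : G -> Prop) (x : G) (w : seq letter) : Prop :=
  exists u w' v, w = u ++ w' ++ v /\ size u <= 1 /\ size v <= 1 /\
    geodesicY H (gmul x (eval u)) w'.

End Words.

(* Main.v *)
Require Import Defs.
From mathcomp Require Import all_boot.
From Stdlib Require Import Classical ClassicalEpsilon Lia.
From mathcomp Require Import zify.
Set Implicit Arguments. Unset Strict Implicit. Unset Printing Implicit Defensive.

Lemma mulgV' (G : group) (x : G) : gmul x (ginv x) = gone G.
Proof.
have e: gmul x (ginv x) = gmul (gmul (ginv (ginv x)) (ginv x)) (gmul x (ginv x)).
  by rewrite gmulV gmul1.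
rewrite e -gmulA (gmulA (ginv x) x) gmulV gmul1 gmulV //.
Qed.

Lemma mulg1' (G : group) (x : G) : gmul x (gone G) = x.
Proof. by rewrite -(gmulV x) gmulA mulgV' gmul1. Qed.

Lemma mulgK' (G : group) (x a b : G) : gmul x a = gmul x b -> a = b.
Proof. move=> e. by rewrite -(gmul1 a) -(gmulV x) -gmulA e gmulA gmulV gmul1. Qed.

Lemma mul_eq1 (G : group) (a b : G) : gmul a b = gone G -> gmul b a = gone G.
Proof. move=> e. have -> : b = ginv a. apply: (@mulgK' G a); by rewrite e mulgV'. by rewrite gmulV. Qed.

Lemma eval_cons (G : group) (A : finType) (pi : A -> G) l w :
  eval pi (l :: w) = gmul (eval_letter pi l) (eval pi w).
Proof. by []. Qed.

Lemma eval_cat (G : group) (A : finType) (pi : A -> G) a b :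
  eval pi (a ++ b) = gmul (eval pi a) (eval pi b).
Proof.
elim: a => [|l a IH]; first by rewrite /= gmul1.
by rewrite cat_cons !eval_cons IH gmulA.
Qed.

Definition winv (A : finType) (w : seq (letter A)) : seq (letter A) :=
  rev (map (fun l => (l.1, ~~ l.2)) w).

Lemma eval_winv (G : group) (A : finType) (pi : A -> G) w :
  gmul (eval pi (winv w)) (eval pi w) = gone G.
Proof.
elim: w => [|l w IH]; first by rewrite /= gmul1.
rewrite /winv map_cons rev_cons -cats1 -/(winv w) eval_cat eval_cons eval_cons.
rewrite /= mulg1' -gmulA (gmulA _ (eval_letter pi l)).
have -> : gmul (eval_letter pi (l.1, ~~ l.2)) (eval_letter pi l) = gone G.
  by case: l => a [] ; rewrite /eval_letter /= ?mulgV' ?gmulV.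
by rewrite gmul1.
Qed.
Lemma ex_min (P : nat -> Prop) : (exists n, P n) -> exists n, P n /\ forall m, P m -> n <= m.
Proof.
move=> [n Pn]; apply: NNPP => H.
have K: forall k j, j <= k -> ~ P j.
  elim=> [|k IH] j Hj Pj; apply: H; exists j; split=> // m Pm.
    by case: j Hj Pj.
  case: (leqP j m) => // Hm.
  exfalso; apply: (IH m) => //; lia.
exact: (K n n (leqnn n) Pn).
Qed.

Definition dist (G : group) (A : finType) (pi : A -> G) (x y : G) : nat :=
  epsilon (inhabits 0) (fun n => dX_le pi x y n /\ forall m, dX_le pi x y m -> n <= m).

Lemma dX_ex (G : group) (A : finType) (pi : A -> G) x y :
  generates pi -> exists n, dX_le pi x y n.
Proof.
move=> gen; case: (gen (gmul (ginv x) y)) => w e.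
exists (size w), w; split => //. by rewrite e gmulA mulgV' gmul1.
Qed.

Lemma dist_spec (G : group) (A : finType) (pi : A -> G) x y :
  generates pi -> dX_le pi x y (dist pi x y) /\ forall m, dX_le pi x y m -> dist pi x y <= m.
Proof.
move=> gen; rewrite /dist; exact: (epsilon_spec (inhabits 0) _ (ex_min (dX_ex x y gen))).
Qed.

Lemma dX_mono (G : group) (A : finType) (pi : A -> G) x y m n :
  m <= n -> dX_le pi x y m -> dX_le pi x y n.
Proof. move=> mn [w [s e]]; exists w; split=> //; exact: leq_trans s mn. Qed.

Lemma distP (G : group) (A : finType) (pi : A -> G) x y n :
  generates pi -> dX_le pi x y n <-> dist pi x y <= n.
Proof.
move=> gen; have [d1 d2] := dist_spec x y gen; split; first exact: d2.
move=> h; exact: dX_mono h d1.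
Qed.

Lemma dist_word (G : group) (A : finType) (pi : A -> G) x w :
  generates pi -> dist pi x (gmul x (eval pi w)) <= size w.
Proof. move=> gen; apply/(distP _ _ _ gen); by exists w. Qed.

Lemma dist_tri (G : group) (A : finType) (pi : A -> G) x y z :
  generates pi -> dist pi x z <= dist pi x y + dist pi y z.
Proof.
move=> gen; have [[w1 [s1 e1]] _] := dist_spec x y gen.
have [[w2 [s2 e2]] _] := dist_spec y z gen.
apply/(distP _ _ _ gen); exists (w1 ++ w2); split.
  rewrite size_cat; lia.
by rewrite eval_cat gmulA e1 e2.
Qed.

Lemma dist_sym_le (G : group) (A : finType) (pi : A -> G) x y :
  generates pi -> dist pi y x <= dist pi x y.
Proof.
move=> gen; have [[w [s e]] _] := dist_spec x y gen.
apply/(distP _ _ _ gen); exists (winv w); split.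
  by rewrite /winv size_rev size_map.
by rewrite -e -gmulA (mul_eq1 (eval_winv pi w)) mulg1'.
Qed.

Lemma dist_sym (G : group) (A : finType) (pi : A -> G) x y :
  generates pi -> dist pi y x = dist pi x y.
Proof. move=> gen; apply/eqP; rewrite eqn_leq !dist_sym_le //. Qed.

Lemma dist_transl (G : group) (A : finType) (pi : A -> G) z x y :
  generates pi -> dist pi (gmul z x) (gmul z y) = dist pi x y.
Proof.
move=> gen; apply/eqP; rewrite eqn_leq; apply/andP; split.
  have [[w [s e]] _] := dist_spec x y gen.
  apply/(distP _ _ _ gen); exists w; split => //. by rewrite -gmulA e.
have [[w [s e]] _] := dist_spec (gmul z x) (gmul z y) gen.
apply/(distP _ _ _ gen); exists w; split => //. apply: (@mulgK' _ z). by rewrite gmulA.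
Qed.

Lemma dist_refl (G : group) (A : finType) (pi : A -> G) x :
  generates pi -> dist pi x x = 0.
Proof.
move=> gen; apply/eqP; rewrite -leqn0; apply/(distP _ _ _ gen); exists [::]; split=> //.
by rewrite /= mulg1'.
Qed.

Definition between (G : group) (A : finType) (pi : A -> G) (x y z : G) :=
  dist pi x y + dist pi y z = dist pi x z.

Lemma geoword (G : group) (A : finType) (pi : A -> G) x y :
  generates pi -> exists w, gmul x (eval pi w) = y /\ size w = dist pi x y.
Proof.
move=> gen; have [[w [s e]] _] := dist_spec x y gen.
exists w; split => //; apply/eqP; rewrite eqn_leq s -{1}e dist_word //.
Qed.

Lemma geo_of (G : group) (A : finType) (pi : A -> G) x w :
  generates pi -> size w = dist pi x (gmul x (eval pi w)) -> geodesicX pi w.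
Proof. move=> gen sw w' e; rewrite sw -e; exact: dist_word. Qed.

Lemma geo_size (G : group) (A : finType) (pi : A -> G) x w :
  generates pi -> geodesicX pi w -> size w = dist pi x (gmul x (eval pi w)).
Proof.
move=> gen g; apply/eqP; rewrite eqn_leq dist_word // andbT.
have [w' [e s]] := geoword x (gmul x (eval pi w)) gen.
rewrite -s; apply: g; exact: mulgK' e.
Qed.

Lemma between_word (G : group) (A : finType) (pi : A -> G) x w j :
  generates pi -> size w = dist pi x (gmul x (eval pi w)) ->
  between pi x (gmul x (eval pi (take j w))) (gmul x (eval pi w)).
Proof.
move=> gen sw; rewrite /between.
have E : gmul x (eval pi w) = gmul (gmul x (eval pi (take j w))) (eval pi (drop j w)).
  by rewrite -gmulA -eval_cat cat_take_drop.
have h1 := dist_word x (take j w) gen.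
have h2 := dist_word (gmul x (eval pi (take j w))) (drop j w) gen.
have h3 := dist_tri x (gmul x (eval pi (take j w))) (gmul x (eval pi w)) gen.
have h4 : size (take j w) + size (drop j w) = size w by rewrite -size_cat cat_take_drop.
rewrite -E in h2; lia.
Qed.

Lemma between_sym (G : group) (A : finType) (pi : A -> G) x y z :
  generates pi -> between pi x y z -> between pi z y x.
Proof. move=> gen; rewrite /between (dist_sym y x) // (dist_sym z x) // (dist_sym z y) //; lia. Qed.

Lemma pt (G : group) (A : finType) (pi : A -> G) x y i :
  generates pi -> i <= dist pi x y -> exists p, dist pi x p = i /\ between pi x p y.
Proof.
move=> gen hi; have [w [e s]] := geoword x y gen.
exists (gmul x (eval pi (take i w))).
have b : between pi x (gmul x (eval pi (take i w))) y.
  rewrite -e; apply: between_word => //; by rewrite e.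
split => //.
have h1 := dist_word x (take i w) gen.
have h2 := dist_word (gmul x (eval pi (take i w))) (drop i w) gen.
rewrite -gmulA -eval_cat cat_take_drop e in h2.
rewrite size_takel in h1; last by rewrite s.
rewrite size_drop s in h2.
move: b; rewrite /between; lia.
Qed.

Definition rips_cond (G : group) (A : finType) (pi : A -> G) (delta : nat) :=
  forall u v w,
    geodesicX pi u -> geodesicX pi v -> geodesicX pi w ->
    eval pi (u ++ v ++ w) = gone G ->
    forall i, i <= size u ->
      (exists j, j <= size v /\
         dX_le pi (vertX pi (gone G) u i) (vertX pi (eval pi u) v j) delta) \/
      (exists k, k <= size w /\
         dX_le pi (vertX pi (gone G) u i) (vertX pi (eval pi (u ++ v)) w k) delta).

Lemma rips (G : group) (A : finType) (pi : A -> G) d O P Q p :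
  generates pi -> rips_cond pi d -> between pi O p P ->
  (exists q, dist pi p q <= d /\ between pi O q Q) \/
  (exists q, dist pi p q <= d /\ between pi P q Q).
Proof.
move=> gen Hd bp.
have [a1 [e1 s1]] := geoword O p gen.
have [a2 [e2 s2]] := geoword p P gen.
have [v [ev sv]] := geoword P Q gen.
have [w [ew sw]] := geoword Q O gen.
have eU : gmul O (eval pi (a1 ++ a2)) = P by rewrite eval_cat gmulA e1 e2.
have gu : geodesicX pi (a1 ++ a2).
  apply: (geo_of (x:=O)) => //; rewrite eU size_cat s1 s2; exact: bp.
have gv : geodesicX pi v by apply: (geo_of (x:=P)) => //; rewrite ev.
have gw : geodesicX pi w by apply: (geo_of (x:=Q)) => //; rewrite ew.
have e0 : eval pi ((a1 ++ a2) ++ v ++ w) = gone G.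
  apply: (@mulgK' _ O); rewrite mulg1' (eval_cat pi (a1 ++ a2)) gmulA eU eval_cat gmulA ev ew //.
have hi : size a1 <= size (a1 ++ a2) by rewrite size_cat leq_addr.
case: (Hd _ _ _ gu gv gw e0 _ hi); rewrite /vertX gmul1 take_size_cat //.
  move=> [j [hj dd]]; right; exists (gmul P (eval pi (take j v))); split.
    rewrite -e1 -eU -gmulA dist_transl //; exact/(distP _ _ _ gen).
  rewrite -ev; apply: between_word => //; by rewrite ev.
move=> [k [hk dd]]; left; exists (gmul Q (eval pi (take k w))); split.
  have eQ : gmul O (eval pi ((a1 ++ a2) ++ v)) = Q by rewrite eval_cat gmulA eU ev.
  rewrite -e1 -eQ -gmulA dist_transl //; exact/(distP _ _ _ gen).
apply: between_sym => //; rewrite -ew; apply: between_word => //; by rewrite ew.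
Qed.

Definition qc_cond (G : group) (A : finType) (pi : A -> G) (H : G -> Prop) (E : nat) :=
  forall h w, H h -> geodesicX pi w -> H (gmul h (eval pi w)) ->
    forall i, i <= size w -> exists h', H h' /\ dX_le pi (vertX pi h w i) h' E.

Lemma qc (G : group) (A : finType) (pi : A -> G) H E h1 h2 p :
  generates pi -> qc_cond pi H E -> H h1 -> H h2 -> between pi h1 p h2 ->
  exists x, H x /\ dist pi p x <= E.
Proof.
move=> gen HE H1 H2 bp.
have [a1 [e1 s1]] := geoword h1 p gen.
have [a2 [e2 s2]] := geoword p h2 gen.
have eU : gmul h1 (eval pi (a1 ++ a2)) = h2 by rewrite eval_cat gmulA e1 e2.
have gu : geodesicX pi (a1 ++ a2).
  apply: (geo_of (x:=h1)) => //; rewrite eU size_cat s1 s2; exact: bp.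
have hi : size a1 <= size (a1 ++ a2) by rewrite size_cat leq_addr.
rewrite -eU in H2.
have [x [Hx dd]] := HE _ _ H1 gu H2 _ hi.
exists x; split => //; move: dd; rewrite /vertX take_size_cat // e1; by move/(distP _ _ _ gen).
Qed.

Lemma LA (G : group) (A : finType) (pi : A -> G) d O P Q K :
  generates pi -> rips_cond pi d ->
  (K + 2 * d + 1 <= dist pi O P -> forall p, dist pi O p = K + 2 * d + 1 ->
      between pi O p P -> dist pi O Q <= dist pi p Q + K) ->
  dist pi O P + dist pi O Q <= dist pi P Q + 2 * (K + 2 * d + 1) + 2 * d.
Proof.
move=> gen Hd hyp.
have t0 := dist_tri O P Q gen.
case: (leqP (K + 2 * d + 1) (dist pi O P)) => hi; last by lia.
have [p [dp bp]] := pt gen hi.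
have hb := hyp hi p dp bp.
move: (bp); rewrite /between => bp'.
case: (rips Q gen Hd bp) => [[q [dq bq]] | [q [dq bq]]]; move: (bq); rewrite /between => bq'.
  have t1 := dist_tri O q p gen.
  have t2 := dist_tri p q Q gen.
  have s1 := dist_sym q p gen.
  lia.
have t1 := dist_tri P q p gen.
have t2 := dist_tri O p Q gen.
have t3 := dist_tri p q Q gen.
have s1 := dist_sym q p gen.
have s2 := dist_sym p P gen.
lia.
Qed.

Lemma invM' (G : group) (a b : G) : ginv (gmul a b) = gmul (ginv b) (ginv a).
Proof.
apply: (@mulgK' _ (gmul a b)); rewrite mulgV' -gmulA (gmulA b) mulgV' gmul1 mulgV' //.
Qed.

Theorem lemma3p3 (G : group) (A : finType) (pi : A -> G) (H : G -> Prop) :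
  generates pi -> hyperbolic pi -> subgroup H -> quasiconvex pi H ->
  exists K1 : nat, 0 < K1 /\
    forall g f : G,
      (forall x, coset_eq H x g -> len_le pi g x) ->
      (forall x, coset_eq H x f -> len_le pi f x) ->
      forall w : seq (letter A),
        pathY pi H g w f -> near_geodesicY pi H g w ->
        forall h : G, H h -> gmul h f = gmul g (eval pi w) ->
          dX_le pi (gone G) h K1.
Proof.
move=> gen [d Hd] [H1 [Hmul Hinv]] [E [E0 HE]].
exists ((E + 2 * d + 1) + d + (2 * (E + 2 * d + 1) + 2 * d) +
        ((2 * (E + 2 * d + 1) + 2 * d) + 2 * ((d + E) + 2 * d + 1) + 2 * d + 4) + 1).
split; first lia.
move=> g f mg mf w _ [u [w' [v [ew [su [sv gY]]]]]] h Hh ehf.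
apply/(distP _ _ _ gen).
have Mg : forall x, H x -> dist pi (gone G) g <= dist pi x g.
  move=> x Hx.
  have c : coset_eq H (gmul (ginv x) g) g.
    by rewrite /coset_eq -gmulA mulgV' mulg1'; apply: Hinv.
  have [d1 _] := dist_spec (gone G) (gmul (ginv x) g) gen.
  have := mg _ c _ d1; move/(distP _ _ _ gen).
  by rewrite -(dist_transl x (gone G) (gmul (ginv x) g)) // mulg1' gmulA mulgV' gmul1.
have Mf : forall x, H x -> dist pi (gone G) f <= dist pi x (gmul h f).
  move=> x Hx.
  have c : coset_eq H (gmul (ginv x) (gmul h f)) f.
    rewrite /coset_eq -gmulA -gmulA mulgV' mulg1'; apply: Hmul => //; exact: Hinv.
  have [d1 _] := dist_spec (gone G) (gmul (ginv x) (gmul h f)) gen.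
  have := mf _ c _ d1; move/(distP _ _ _ gen).
  by rewrite -(dist_transl x (gone G) (gmul (ginv x) (gmul h f))) // mulg1' gmulA mulgV' gmul1.
have dhf : dist pi h (gmul h f) = dist pi (gone G) f.
  by rewrite -{1}(mulg1' h) dist_transl.
have shh := dist_sym h (gone G) gen.
have S1 := @LA G A pi d h (gone G) (gmul h f) E gen Hd.
have {}S1 : dist pi h (gone G) + dist pi h (gmul h f) <=
    dist pi (gone G) (gmul h f) + 2 * (E + 2 * d + 1) + 2 * d.
  apply: S1 => _ p _ bp.
  have [x [Hx dpx]] := qc gen HE Hh H1 bp.
  have m := Mf x Hx.
  have t := dist_tri x p (gmul h f) gen.
  have s := dist_sym p x gen.
  lia.
case: (leqP (dist pi (gone G) h) ((d + E) + 2 * d + 1 + d + (2 * (E + 2 * d + 1) + 2 * d))) => hs.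
  lia.
have S2 := @LA G A pi d (gone G) (gmul h f) g (d + E) gen Hd.
have {}S2 : dist pi (gone G) (gmul h f) + dist pi (gone G) g <=
    dist pi (gmul h f) g + 2 * ((d + E) + 2 * d + 1) + 2 * d.
  apply: S2 => _ p dp bp.
  case: (rips h gen Hd bp) => [[q [dq bq]] | [q [dq bq]]].
    have [x [Hx dqx]] := qc gen HE H1 Hh bq.
    have m := Mg x Hx.
    have t1 := dist_tri x p g gen.
    have t2 := dist_tri x q p gen.
    have s1 := dist_sym p x gen.
    have s2 := dist_sym q x gen.
    have s3 := dist_sym p q gen.
    lia.
  exfalso.
  move: bq; rewrite /between => bq.
  have t1 := dist_tri (gone G) p q gen.
  have t2 := dist_tri (gone G) q (gmul h f) gen.
  have s1 := dist_sym q (gmul h f) gen.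
  have s2 := dist_sym h (gmul h f) gen.
  lia.
have eg : gmul g (eval pi w) = gmul h f by [].
have t0 := dist_word g w gen; rewrite eg in t0.
have sw : size w = size u + size w' + size v by rewrite ew !size_cat addnA.
have e3 : gmul (gmul g (eval pi u)) (eval pi w') = gmul (gmul h f) (ginv (eval pi v)).
  rewrite -eg ew !eval_cat !gmulA -(gmulA _ (eval pi v)) mulgV' mulg1' //.
set X := gmul f (ginv (eval pi v)).
have [w'' [e'' s'']] := geoword (gmul g (eval pi u)) X gen.
have hw' : size w' <= size w''.
  apply: gY; rewrite /pathY /coset_eq e'' e3 -gmulA -/X invM' gmulA mulgV' gmul1.
  exact: Hinv.
have t1 := dist_tri (gmul g (eval pi u)) g X gen.
have t2 := dist_tri g (gone G) X gen.
have t3 := dist_tri (gone G) f X gen.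
have u1 := dist_word g u gen.
have s1 := dist_sym g (gmul g (eval pi u)) gen.
have s2 := dist_sym g (gone G) gen.
have v1 : dist pi f X <= size v.
  rewrite /X -{1}(mulg1' f) dist_transl // -(dist_transl (eval pi v) (gone G) (ginv (eval pi v))) //.
  rewrite mulgV' mulg1' dist_sym //.
  by have := dist_word (gone G) v gen; rewrite gmul1.
have s3 := dist_sym g (gmul h f) gen.
lia.
Qed.
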